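(* Let $G$ be a discrete group, $\mathfrak g$ a finite string of elements of $G$ and $\mathcal E$ a finite partition of $G$. Suppose the graph $\Gamma(G,\mathfrak g,\mathcal E)$ has a directed edge from a vertex $A=(a_C)_{C\in Con(\mathfrak g,\mathcal E)}$ to a vertex $B=(b_C)_{C\in Con(\mathfrak g,\mathcal E)}$ such that $a_C\in\{0,1\}$ and $b_C-a_C>0$ for every $C\in Con(\mathfrak g,\mathcal E)$. Then $G$ admits a paradoxical decomposition (whose pieces are subsets of the sets $x_0(C)$ and their translates).
   Context: Configurations: for $\mathfrak g=(g_1,\dots,g_n)$ and a partition $\mathcal E=\{E_1,\dots,E_m\}$ of $G$, a configuration is $C=(c_0,\dots,c_n)\in\{1,\dots,m\}^{n+1}$ such that some $x\in G$ has $x\in E_{c_0}$ and $g_ix\in E_{c_i}$ ($1\le i\le n$); $Con(\mathfrak g,\mathcal E)$ is the finite set of configurations, and $x_0(C)=E_{c_0}\cap\bigcap_{j=1}^ng_j^{-1}E_{c_j}$; the sets $x_0(C)$ partition $G$. The graph $\Gamma=\Gamma(G,\mathfrak g,\mathcal E)$: its vertices are all tuples $(a_C)_{C\in Con(\mathfrak g,\mathcal E)}$ of nonnegative integers. There is a directed edge from $A=(a_C)$ to $B=(b_C)$ if the set $\bigsqcup_{C:\,a_C\neq0}x_0(C)$ admits a partition into $b=\sum_Cb_C$ pieces, indexed as $\{A_{C,k}: C\in Con(\mathfrak g,\mathcal E),\,1\le k\le b_C\}$, together with elements $h_{C,k}\in G$ such that $h_{C,k}A_{C,k}=x_0(C)$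 for every $C$ and every $1\le k\le b_C$. A paradoxical decomposition of $G$: pairwise disjoint subsets $A_1,\dots,A_r,B_1,\dots,B_s$ of $G$ and elements $a_i,b_j\in G$ with $G=\bigcup_ia_iA_i=\bigcup_jb_jB_j$. *)

(* Defs.v *)
From mathcomp Require Import all_boot.
Set Implicit Arguments. Unset Strict Implicit. Unset Printing Implicit Defensive.

Record group := Group {
  carrier :> Type;
  mul : carrier -> carrier -> carrier;
  one : carrier;
  inv : carrier -> carrier;
  mulA : forall x y z, mul x (mul y z) = mul (mul x y) z;
  mul1g : forall x, mul one x = x;
  mulVg : forall x, mul (inv x) x = one
}.

(* Candidate configurations C = (c_0, ..., c_n), c_i in {0..m-1}
   (0-indexed version of {1..m}).  A string g = (g_1..g_n) is g : 'I_n -> G,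
   with g_{i+1} = g i; the partition E = {E_0,...,E_{m-1}} of G is given by
   its labelling function E : G -> 'I_m (x \in E_j iff E x = j). *)
Definition conf_type (n m : nat) := {ffun 'I_n.+1 -> 'I_m}.

Definition x0 (G : group) (n m : nat) (g : 'I_n -> G) (E : G -> 'I_m)
  (C : conf_type n m) : G -> Prop :=
  fun x => E x = C ord0 /\ forall i : 'I_n, E (mul (g i) x) = C (lift ord0 i).

Definition is_config (G : group) (n m : nat) (g : 'I_n -> G) (E : G -> 'I_m)
  (C : conf_type n m) : Prop := exists x, x0 g E C x.

(* Directed edge A -> B in Gamma(G, g, E); vertices are tuples indexed by Con,
   represented as functions conf_type n m -> nat (only values on Con matter).
   Pieces A_{C,k} are indexed by k < b_C (0-indexed). *)
Definition gamma_edge (G : group) (n m : nat) (g : 'I_n -> G) (E : G -> 'I_m)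
  (a b : conf_type n m -> nat) : Prop :=
  exists (P : conf_type n m -> nat -> G -> Prop) (h : conf_type n m -> nat -> G),
    (forall C k C' k', is_config g E C -> is_config g E C' ->
       k < b C -> k' < b C' -> (C, k) <> (C', k') ->
       forall x, P C k x -> P C' k' x -> False) /\
    (forall x, (exists C, [/\ is_config g E C, a C <> 0 & x0 g E C x]) <->
               (exists C k, [/\ is_config g E C, k < b C & P C k x])) /\
    (forall C k, is_config g E C -> k < b C ->
       forall y, x0 g E C y <-> exists x, P C k x /\ mul (h C k) x = y).

Definition paradoxical (G : group) : Prop :=
  exists (r s : nat) (A : 'I_r -> G -> Prop) (B : 'I_s -> G -> Prop)
         (a : 'I_r -> G) (b : 'I_s -> G),
    [/\ (forall i j, i <> j -> forall x, A i x -> A j x -> False),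
        (forall i j, i <> j -> forall x, B i x -> B j x -> False),
        (forall i j x, A i x -> B j x -> False),
        (forall y, exists i x, A i x /\ mul (a i) x = y) &
        (forall y, exists j x, B j x /\ mul (b j) x = y)].

(* Main.v *)
Require Import Defs.
From mathcomp Require Import all_boot.

Lemma x0_uniq (G : group) (n m : nat) (g : 'I_n -> G) (E : G -> 'I_m)
  (C C' : conf_type n m) x : x0 g E C x -> x0 g E C' x -> C = C'.
Proof.
move=> [h0 h1] [h0' h1']; apply/ffunP => i.
case: (unliftP ord0 i) => [j ->|->].
  by rewrite -h1 h1'.
by rewrite -h0 h0'.
Qed.

Arguments x0_uniq {G n m g E C C' x}.

Definition conf_of (G : group) (n m : nat) (g : 'I_n -> G) (E : G -> 'I_m)
  (y : carrier G) : conf_type n m :=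
  [ffun i => if unlift ord0 i is Some j then E (Defs.mul (g j) y) else E y].

Lemma x0_conf_of (G : group) (n m : nat) (g : 'I_n -> G) (E : G -> 'I_m) (y : carrier G) :
  x0 g E (@conf_of G n m g E y) y.
Proof.
split; first by rewrite /conf_of ffunE unlift_none.
by move=> i; rewrite /conf_of ffunE liftK.
Qed.

Arguments x0_conf_of {G n m} g E y.

Theorem proposition4p2 (G : group) (n m : nat) (g : 'I_n -> G) (E : G -> 'I_m)
  (E_nonempty : forall j : 'I_m, exists x, E x = j)
  (a b : conf_type n m -> nat)
  (ha01 : forall C, is_config g E C -> a C = 0 \/ a C = 1)
  (hab : forall C, is_config g E C -> a C < b C)
  (hedge : gamma_edge g E a b) :
  paradoxical G.
Proof.
case: hedge => P [h [Hdis [Hun Himg]]].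
have bad : forall C C' k x, x0 g E C x -> a C = 0 -> is_config g E C' ->
    k < b C' -> P C' k x -> False.
  move=> C C' k x hx ha hC' hk hP.
  have [C'' [_ ha'' hx'']] : exists C'', [/\ is_config g E C'', a C'' <> 0 & x0 g E C'' x].
    by apply/Hun; exists C', k.
  by have eC := x0_uniq hx hx''; subst C''.
have b0 : forall C, is_config g E C -> 0 < b C.
  by move=> C hC; apply: leq_ltn_trans (hab C hC).
have b1 : forall C, is_config g E C -> a C <> 0 -> 1 < b C.
  move=> C hC ha; case: (ha01 C hC) => // ha1.
  by have := hab C hC; rewrite ha1.
set r := #|{: conf_type n m}|.
exists r, r,
  (fun i x => is_config g E (enum_val i) /\ P (enum_val i) 0 x),
  (fun j x => is_config g E (enum_val j) /\
     (if a (enum_val j) == 0 then x0 g E (enum_val j) x else P (enum_val j) 1 x)),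
  (fun i => h (enum_val i) 0),
  (fun j => if a (enum_val j) == 0 then Defs.one G else h (enum_val j) 1).
split.
- move=> i j ne x [hi pi] [hj pj].
  apply: (Hdis _ _ _ _ hi hj (b0 _ hi) (b0 _ hj) _ x pi pj).
  by case=> /enum_val_inj.
- move=> i j ne x [hi pi] [hj pj].
  move: pi pj; case: eqP => ei; case: eqP => ej pi pj.
  + by apply: ne; apply: enum_val_inj; exact: (x0_uniq pi pj).
  + exact: (bad _ _ _ _ pi ei hj (b1 _ hj ej) pj).
  + exact: (bad _ _ _ _ pj ej hi (b1 _ hi ei) pi).
  + apply: (Hdis _ _ _ _ hi hj (b1 _ hi ei) (b1 _ hj ej) _ x pi pj).
    by case=> /enum_val_inj.
- move=> i j x [hi pi] [hj pj].
  move: pj; case: eqP => ej pj.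
  + exact: (bad _ _ _ _ pj ej hi (b0 _ hi) pi).
  + by apply: (Hdis _ _ _ _ hi hj (b0 _ hi) (b1 _ hj ej) _ x pi pj); case.
- move=> y.
  have hc : is_config g E (@conf_of G n m g E y) by exists y; exact: x0_conf_of.
  exists (enum_rank (@conf_of G n m g E y)); rewrite enum_rankK.
  have [x [px hx]] := (Himg _ 0 hc (b0 _ hc) y).1 (x0_conf_of g E y).
  by exists x.
- move=> y.
  have hc : is_config g E (@conf_of G n m g E y) by exists y; exact: x0_conf_of.
  exists (enum_rank (@conf_of G n m g E y)); rewrite enum_rankK.
  case: eqP => ea.
    by exists y; split; [split=> //; exact: x0_conf_of | exact: Defs.mul1g].
  have [x [px hx]] := (Himg _ 1 hc (b1 _ hc ea) y).1 (x0_conf_of g E y).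
  by exists x.
Qed.
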